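(* Let $(A,\cdot,\circ)$ be a skew brace and $B$, $C$ sub-skew braces with $A = B\cdot C$. If either (a) $C$ is a trivial skew brace and a left ideal in $A$, or (b) $B$ is a trivial skew brace and a normal subgroup of $(A,\circ)$, then $B*C$ is a left ideal in $A$.
   Context: A skew brace is a set $A$ with two group operations $\cdot$ (often written by juxtaposition) and $\circ$ such that $a\circ(bc) = (a\circ b)\,a^{-1}\,(a\circ c)$ for all $a,b,c\in A$. $a^{-1}$ denotes the inverse in $(A,\cdot)$. Define $a*b = a^{-1}(a\circ b)b^{-1}$; for subsets $X,Y$, $X*Y$ is the subgroup of $(A,\cdot)$ generated by all $x*y$. A sub-skew brace is a subset that is a subgroup of both groups; it is trivial if $a\circ b=ab$ for all its elements. A subgroup $I$ of $(A,\cdot)$ is a left ideal in $A$ if $A*I\subseteq I$. $A=B\cdot C$ means every element is $bc$ with $b\in B$, $c\in C$. *)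

(* Defs.v *)
Set Implicit Arguments.

Definition is_group (T : Type) (op : T -> T -> T) (e : T) (inv : T -> T) : Prop :=
  (forall a b c, op a (op b c) = op (op a b) c) /\
  (forall a, op e a = a) /\ (forall a, op a e = a) /\
  (forall a, op (inv a) a = e) /\ (forall a, op a (inv a) = e).

Record SkewBrace (T : Type) := {
  mul : T -> T -> T;
  one : T;
  inv : T -> T;
  circ : T -> T -> T;
  cone : T;
  cinv : T -> T;
  mul_group : is_group mul one inv;
  circ_group : is_group circ cone cinv;
  brace_law : forall a b c,
      circ a (mul b c) = mul (mul (circ a b) (inv a)) (circ a c)
}.

Section SB.
Variables (T : Type) (A : SkewBrace T).

Definition star (a b : T) : T :=
  mul A (mul A (inv A a) (circ A a b)) (inv A b).

Definition subgroup_mul (S : T -> Prop) : Prop :=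
  S (one A) /\ (forall x y, S x -> S y -> S (mul A x y)) /\
  (forall x, S x -> S (inv A x)).

Definition subgroup_circ (S : T -> Prop) : Prop :=
  S (cone A) /\ (forall x y, S x -> S y -> S (circ A x y)) /\
  (forall x, S x -> S (cinv A x)).

Definition gen_mul (X : T -> Prop) : T -> Prop :=
  fun z => forall H, subgroup_mul H -> (forall x, X x -> H x) -> H z.

Definition star_set (X Y : T -> Prop) : T -> Prop :=
  gen_mul (fun z => exists x y, X x /\ Y y /\ z = star x y).

Definition full : T -> Prop := fun _ => True.

Definition sub_skew_brace (S : T -> Prop) : Prop :=
  subgroup_mul S /\ subgroup_circ S.

Definition trivial_sub_skew_brace (S : T -> Prop) : Prop :=
  sub_skew_brace S /\ (forall a b, S a -> S b -> circ A a b = mul A a b).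

Definition left_ideal (I : T -> Prop) : Prop :=
  subgroup_mul I /\ (forall z, star_set full I z -> I z).

Definition normal_circ (S : T -> Prop) : Prop :=
  subgroup_circ S /\
  (forall a x, S x -> S (circ A (circ A a x) (cinv A a))).

Definition factorizes (B C : T -> Prop) : Prop :=
  forall a, exists b c, B b /\ C c /\ a = mul A b c.

End SB.

(* Main.v *)
Require Import Defs.

Section P.
Variables (T : Type) (A : SkewBrace T).
Local Set Implicit Arguments.
Local Notation m := (mul A).
Local Notation e := (one A).
Local Notation iv := (inv A).
Local Notation o := (circ A).

Lemma massoc a b c : m a (m b c) = m (m a b) c.
Proof. destruct (mul_group A) as [H _]. apply H. Qed.
Lemma mlid a : m e a = a.
Proof. destruct (mul_group A) as [_ [H _]]. apply H. Qed.
Lemma mrid a : m a e = a.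
Proof. destruct (mul_group A) as [_ [_ [H _]]]. apply H. Qed.
Lemma mlinv a : m (iv a) a = e.
Proof. destruct (mul_group A) as [_ [_ [_ [H _]]]]. apply H. Qed.
Lemma mrinv a : m a (iv a) = e.
Proof. destruct (mul_group A) as [_ [_ [_ [_ H]]]]. apply H. Qed.
Lemma cassoc a b c : o a (o b c) = o (o a b) c.
Proof. destruct (circ_group A) as [H _]. apply H. Qed.
Lemma clid a : o (cone A) a = a.
Proof. destruct (circ_group A) as [_ [H _]]. apply H. Qed.
Lemma crid a : o a (cone A) = a.
Proof. destruct (circ_group A) as [_ [_ [H _]]]. apply H. Qed.
Lemma clinv a : o (cinv A a) a = cone A.
Proof. destruct (circ_group A) as [_ [_ [_ [H _]]]]. apply H. Qed.
Lemma crinv a : o a (cinv A a) = cone A.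
Proof. destruct (circ_group A) as [_ [_ [_ [_ H]]]]. apply H. Qed.

Lemma mlcancel a x y : m a x = m a y -> x = y.
Proof.
  intro H. assert (H0 : m (iv a) (m a x) = m (iv a) (m a y)) by (rewrite H; reflexivity).
  rewrite !massoc, mlinv, !mlid in H0. exact H0.
Qed.

Lemma inv_mul x y : iv (m x y) = m (iv y) (iv x).
Proof.
  apply (mlcancel (m x y)). rewrite mrinv.
  rewrite <- massoc, (massoc y), mrinv, mlid, mrinv. reflexivity.
Qed.

Lemma inv_inv x : iv (iv x) = x.
Proof. apply (mlcancel (iv x)). rewrite mrinv, mlinv. reflexivity. Qed.

Lemma inv_one : iv e = e.
Proof. rewrite <- (mrid (iv e)). apply mlinv. Qed.

Lemma cone_one : cone A = e.
Proof.
  pose proof (brace_law A (cone A) e e) as H.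
  rewrite !clid, !mlid, !mrid in H.
  assert (H1 : iv (cone A) = e) by (symmetry; exact H).
  rewrite <- (inv_inv (cone A)), H1. apply inv_one.
Qed.

Definition lam a x := m (iv a) (o a x).

Lemma lam_mul a x y : lam a (m x y) = m (lam a x) (lam a y).
Proof. unfold lam. rewrite brace_law. rewrite !massoc. reflexivity. Qed.

Lemma lam_one a : lam a e = e.
Proof.
  pose proof (lam_mul a e e) as H. rewrite (mlid e) in H.
  apply (mlcancel (lam a e)). rewrite mrid. exact (eq_sym H).
Qed.

Lemma lam_inv a x : lam a (iv x) = iv (lam a x).
Proof.
  apply (mlcancel (lam a x)). rewrite <- lam_mul, !mrinv. apply lam_one.
Qed.

Lemma circ_lam b x : o b x = m b (lam b x).
Proof. unfold lam. rewrite massoc, mrinv, mlid. reflexivity. Qed.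

Lemma lam_comp a b x : lam (o a b) x = lam a (lam b x).
Proof.
  change (lam (o a b) x) with (m (iv (o a b)) (o (o a b) x)).
  change (lam a (lam b x)) with (m (iv a) (o a (lam b x))).
  rewrite <- cassoc, (circ_lam b x), brace_law, !massoc, mlinv, mlid. reflexivity.
Qed.

Lemma lam_cone x : lam (cone A) x = x.
Proof. unfold lam. rewrite clid, cone_one, inv_one, mlid. reflexivity. Qed.

Lemma star_lam x y : star A x y = m (lam x y) (iv y).
Proof. reflexivity. Qed.

Lemma lam_star x y : lam x y = m (star A x y) y.
Proof. rewrite star_lam, <- massoc, mlinv, mrid. reflexivity. Qed.

Lemma lam_triv c c' : o c c' = m c c' -> lam c c' = c'.
Proof. intro H. unfold lam. rewrite H, massoc, mlinv, mlid. reflexivity. Qed.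

Lemma gen_sub X : subgroup_mul A (gen_mul A X).
Proof.
  split; [|split].
  - intros H [H1 _] _. exact H1.
  - intros x y Hx Hy H HH HX. destruct HH as [H1 [H2 H3]].
    apply H2; [apply Hx|apply Hy]; try split; auto.
  - intros x Hx H HH HX. destruct HH as [H1 [H2 H3]].
    apply H3; apply Hx; try split; auto.
Qed.

Lemma gen_in (X : T -> Prop) x : X x -> gen_mul A X x.
Proof. intros Hx H _ HX. apply HX, Hx. Qed.

Lemma closure_from (B C : T -> Prop) :
  (forall a b c, B b -> C c -> star_set A B C (lam a (star A b c))) ->
  left_ideal A (star_set A B C).
Proof.
  intro Hgen.
  pose proof (gen_sub (fun z => exists x y, B x /\ C y /\ z = star A x y)) as HI.
  fold (star_set A B C) in HI.
  assert (Hl : forall a y, star_set A B C y -> star_set A B C (lam a y)).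
  { intros a y Hy. apply (Hy (fun y => star_set A B C (lam a y))).
    - destruct HI as [H1 [H2 H3]]. split; [|split].
      + rewrite lam_one. exact H1.
      + intros x z Hx Hz. rewrite lam_mul. auto.
      + intros x Hx. rewrite lam_inv. auto.
    - intros z [b [c [Hb [Hc ->]]]]. apply Hgen; auto. }
  split; [exact HI|].
  intros z Hz. apply (Hz (star_set A B C)); [exact HI|].
  intros w [x [y [_ [Hy ->]]]]. rewrite star_lam.
  destruct HI as [H1 [H2 H3]]. auto.
Qed.

End P.

Theorem proposition3p2 (T : Type) (A : SkewBrace T) (B C : T -> Prop) :
  sub_skew_brace A B -> sub_skew_brace A C -> factorizes A B C ->
  ((trivial_sub_skew_brace A C /\ left_ideal A C) \/
   (trivial_sub_skew_brace A B /\ normal_circ A B)) ->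
  left_ideal A (star_set A B C).
Proof.
  intros [[B1 [B2 B3]] _] [[C1 [C2 C3]] _] Hf Hcase.
  pose proof (gen_sub A (fun z => exists x y, B x /\ C y /\ z = star A x y)) as HI.
  fold (star_set A B C) in HI. destruct HI as [I1 [I2 I3]].
  apply closure_from.
  destruct Hcase as [[[_ Ctr] [_ Cid]] | [[_ Btr] [_ Bn]]].
  -
    assert (HBC : forall a, exists b c, B b /\ C c /\ a = circ A b c).
    { intros a. destruct (Hf a) as [b0 [c0 [Hb0 [Hc0 ->]]]].
      exists b0, (lam A (cinv A b0) c0). split; [exact Hb0|split].
      - rewrite lam_star. apply C2; [|exact Hc0]. apply Cid.
        apply gen_in. exists (cinv A b0), c0. repeat split; auto.
      - rewrite circ_lam, <- lam_comp, crinv, lam_cone. reflexivity. }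
    intros a b' c' Hb' Hc'.
    destruct (HBC a) as [b0 [c0 [Hb0 [Hc0 Ha]]]].
    destruct (HBC (circ A a b')) as [b3 [c3 [Hb3 [Hc3 Hab]]]].
    rewrite star_lam, lam_mul, lam_inv, <- lam_comp, Hab, lam_comp,
      (lam_triv A c3 c') by (apply Ctr; auto).
    rewrite Ha, lam_comp, (lam_triv A c0 c') by (apply Ctr; auto).
    rewrite !lam_star, inv_mul, <- massoc, (massoc A c'), mrinv, mlid.
    apply I2; [|apply I3]; apply gen_in; eauto 6.
  -
    assert (Hh : forall bb y, B bb -> star_set A B C (mul A (lam A bb y) (inv A y))).
    { intros bb y Hbb. destruct (Hf (inv A y)) as [b1 [c1 [Hb1 [Hc1 Hy]]]].
      assert (Hy' : y = mul A (inv A c1) (inv A b1)).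
      { rewrite <- inv_mul, <- Hy, inv_inv. reflexivity. }
      subst y. rewrite lam_mul, inv_mul, (lam_triv A bb (inv A b1)) by (apply Btr; auto).
      rewrite (inv_inv A b1), massoc, <- (massoc A (lam A bb (inv A c1)) (inv A b1) b1),
        mlinv, mrid.
      apply gen_in. exists bb, (inv A c1). repeat split; auto. }
    intros a b' c' Hb' Hc'.
    set (b'' := circ A (circ A a b') (cinv A a)).
    assert (Hb'' : B b'') by (apply Bn; exact Hb').
    assert (Hab : circ A a b' = circ A b'' a).
    { unfold b''. rewrite <- cassoc, clinv, crid. reflexivity. }
    rewrite star_lam, lam_mul, lam_inv, <- lam_comp, Hab, lam_comp.
    apply Hh. exact Hb''.
Qed.
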